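(* Let $f_1,\dots,f_T\in\mathcal F_X(\alpha,l,G)$ be arbitrary, and run RHGD and RHAG (defined in the context) with prediction window $W\ge 0$ and stepsizes $\gamma=1/l$, $\eta=1/L$, where $L=l+4\beta$. Then $$\mathrm{Reg}(\mathrm{RHGD},\mathcal L_T)\le Q_f\,\delta\Big(1-\frac{1}{Q_f}\Big)^{W}L_T,\qquad \mathrm{Reg}(\mathrm{RHAG},\mathcal L_T)\le 2\delta\Big(1-\frac{1}{\sqrt{Q_f}}\Big)^{W}L_T,$$ where $\mathcal L_T=\mathcal L_T(L_T,\mathcal F_X(\alpha,l,G))$, $\delta=(\beta/l+1)\frac{G}{1-\kappa}$, $\kappa=\sqrt{1-\alpha/l}$ and $Q_f=\frac{l+4\beta}{\alpha}$.
   Context: Setting: $X\subseteq\mathbb R^n$ is nonempty, compact and convex with diameter $D$, i.e. $\|x-y\|\le D$ for all $x,y\in X$. The parameter $\beta\ge 0$, the initial point $x_0\in X$, and the horizon $T\ge 1$ are fixed, and $\Pi_X$ denotes Euclidean projection onto $X$. Function class: for $0<\alpha\le l$ and $G>0$, $\mathcal F_X(\alpha,l,G)$ is the set of differentiable $f:\mathbb R^n\to\mathbb R$ such that for all $x,y\in\mathbb R^n$ $$f(x)+\langle\nabla f(x),y-x\rangle+\tfrac{\alpha}{2}\|y-x\|^2\le f(y)\le f(x)+\langle\nabla f(x),y-x\rangle+\tfrac{l}{2}\|y-x\|^2,$$ and $\|\nabla f(x)\|\le G$ for all $x\in X$. Total cost: $C_1^T(x)=\sum_{t=1}^T\big(f_t(x_t)+\frac\beta2\|x_t-x_{t-1}\|^2\big)$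 for $x=(x_1,\dots,x_T)$, with $x_0$ the given initial point. Path length: let $\theta_t=\arg\min_{x\in X}f_t(x)$ and $\theta_0=x_0$. For $0\le L_T\le DT$, $\mathcal L_T(L_T,\mathcal F_X(\alpha,l,G))$ is the set of sequences $\{f_t\}_{t=1}^T\subseteq\mathcal F_X(\alpha,l,G)$ with $\sum_{t=1}^T\|\theta_t-\theta_{t-1}\|\le L_T$. Dynamic regret: for an algorithm producing outputs $x^{\mathcal A}=(x^{\mathcal A}_1,\dots,x^{\mathcal A}_T)$ (with $x_0^{\mathcal A}=x_0$), $$\mathrm{Reg}(\mathcal A,\mathcal L_T)=\sup_{\{f_t\}\in\mathcal L_T}\Big(C_1^T(x^{\mathcal A})-\min_{x\in X^T}C_1^T(x)\Big).$$ Partial gradients: for $t<T$, $g_t(a,b,c)=\nabla f_t(b)+\beta(2b-a-c)$; for $t=T$, $g_T(a,b,c)=\nabla f_T(b)+\beta(b-a)$, which does not depend on $c$. RHGD (Receding Horizon Gradient Descent). For each $t\in[T]$ it produces iterates $x_t^s$ for $s=t-W,\dots,t$. - Initialization (online gradient descent): $x_1^{1-W}=x_0$, and for $2\le t\le T$, $$x_t^{t-W}=\Pi_X\big(x_{t-1}^{t-1-W}-\gamma\nabla f_{t-1}(x_{t-1}^{t-1-W})\big).$$ - Updates: for $s=t-W+1,\dots,t$, $$x_t^s=\Pi_X\big(x_t^{s-1}-\eta\, g_t(x_{t-1}^{s-2},x_t^{s-1},x_{t+1}^{s})\big),$$ with the convention $x_0^{s}=x_0$ for all $s$. At each stage $s$,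 the indices $t$ are processed in decreasing order. - Output at stage $t$: $x_t^t$. RHAG (Receding Horizon Accelerated Gradient). Set $\lambda=\frac{1-\sqrt{\alpha\eta}}{1+\sqrt{\alpha\eta}}$. - Initialization: $x_t^{t-W}$ is defined as in RHGD, and $y_t^{t-W}=x_t^{t-W}$. - Updates: for $s=t-W+1,\dots,t$, $$x_t^s=\Pi_X\big(y_t^{s-1}-\eta\, g_t(y_{t-1}^{s-2},y_t^{s-1},y_{t+1}^s)\big),\qquad y_t^s=(1+\lambda)x_t^s-\lambda x_t^{s-1},$$ with the convention $y_0^s=x_0$. - Output at stage $t$: $x_t^t$. *)

(* Defs.v *)
From HB Require Import structures.
From mathcomp Require Import all_boot all_order all_algebra.
From mathcomp Require Import all_classical all_reals all_analysis.
Set Implicit Arguments. Unset Strict Implicit. Unset Printing Implicit Defensive.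
Import Order.TTheory GRing.Theory Num.Theory.
Import numFieldNormedType.Exports.
Local Open Scope classical_set_scope.
Local Open Scope ring_scope.

Section Defs.
Variables (R : realType) (n : nat).
Notation vec := 'rV[R]_n.

Definition dotv (u v : vec) : R := \sum_(i < n) u 0 i * v 0 i.
Definition enorm (u : vec) : R := Num.sqrt (dotv u u).

(* gradient = row vector of partial derivatives (meaningful when f is differentiable) *)
Definition grad (f : vec -> R) (x : vec) : vec :=
  \row_(i < n) ('D_(delta_mx 0 i) f x).

Definition convexS (X : set vec) : Prop :=
  forall x y (lam : R), X x -> X y -> 0 <= lam -> lam <= 1 ->
    X (lam *: x + (1 - lam) *: y).

Definition is_proj (X : set vec) (z p : vec) : Prop :=
  X p /\ forall y, X y -> enorm (z - p) <= enorm (z - y).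

Definition in_class (X : set vec) (alpha l G : R) (f : vec -> R) : Prop :=
  (forall x, differentiable f x) /\
  (forall x y,
      f x + dotv (grad f x) (y - x) + alpha / 2 * enorm (y - x) ^+ 2 <= f y /\
      f y <= f x + dotv (grad f x) (y - x) + l / 2 * enorm (y - x) ^+ 2) /\
  (forall x, X x -> enorm (grad f x) <= G).

Definition is_argmin (X : set vec) (f : vec -> R) (theta : vec) : Prop :=
  X theta /\ forall x, X x -> f theta <= f x.

(* total cost C_1^T(x) with x_0 given; only x 1, ..., x T are used *)
Definition prevpt (x0 : vec) (x : nat -> vec) (t : nat) : vec :=
  if t is t'.+1 then (if t' is 0 then x0 else x t') else x0.

Definition cost (f : nat -> vec -> R) (beta : R) (x0 : vec) (T : nat)
    (x : nat -> vec) : R :=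
  \sum_(1 <= t < T.+1)
     (f t (x t) + beta / 2 * enorm (x t - prevpt x0 x t) ^+ 2).

Definition path_length (x0 : vec) (T : nat) (theta : nat -> vec) : R :=
  \sum_(1 <= t < T.+1) enorm (theta t - prevpt x0 theta t).

Definition pgrad (f : nat -> vec -> R) (beta : R) (T t : nat) (a b c : vec) : vec :=
  if (t < T)%N then grad (f t) b + beta *: (2%:R *: b - a - c)
  else grad (f t) b + beta *: (b - a).

(* OGD initialization: ogd k = x_{k+1}^{k+1-W} *)
Fixpoint ogd (proj : vec -> vec) (f : nat -> vec -> R) (gamma : R) (x0 : vec)
    (k : nat) : vec :=
  if k is k'.+1 then
    let z := ogd proj f gamma x0 k' in proj (z - gamma *: grad (f k) z)
  else x0.

(* init t = x_t^{t-W} for t >= 1 *)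
Definition init proj f gamma x0 (t : nat) : vec := ogd proj f gamma x0 t.-1.

(* RHGD: rhgd_it j t = x_t^{t-W+j} for t >= 1, and x_0 for t = 0.
   The update x_t^s uses x_{t-1}^{s-2}, x_t^{s-1}, x_{t+1}^s, which are all
   iterates with index j-1 in this parametrization. *)
Fixpoint rhgd_it proj f (beta gamma eta : R) (x0 : vec) (T : nat) (j : nat)
    (t : nat) : vec :=
  if t is 0 then x0 else
  match j with
  | 0 => init proj f gamma x0 t
  | j'.+1 =>
      let P := rhgd_it proj f beta gamma eta x0 T j' in
      proj (P t - eta *: pgrad f beta T t (P t.-1) (P t) (P t.+1))
  end.

Definition rhgd_out proj f beta gamma eta x0 T (W : nat) (t : nat) : vec :=
  rhgd_it proj f beta gamma eta x0 T W t.

(* RHAG: rhag_it j t = (x_t^{t-W+j}, y_t^{t-W+j}) for t >= 1, (x0, x0) for t = 0 *)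
Fixpoint rhag_it proj f (beta gamma eta lam : R) (x0 : vec) (T : nat) (j : nat)
    (t : nat) : vec * vec :=
  if t is 0 then (x0, x0) else
  match j with
  | 0 => (init proj f gamma x0 t, init proj f gamma x0 t)
  | j'.+1 =>
      let Y := fun u => (rhag_it proj f beta gamma eta lam x0 T j' u).2 in
      let xold := (rhag_it proj f beta gamma eta lam x0 T j' t).1 in
      let xnew := proj (Y t - eta *: pgrad f beta T t (Y t.-1) (Y t) (Y t.+1)) in
      (xnew, (1 + lam) *: xnew - lam *: xold)
  end.

Definition rhag_out proj f beta gamma eta lam x0 T (W : nat) (t : nat) : vec :=
  (rhag_it proj f beta gamma eta lam x0 T W t).1.

End Defs.

(* Main.v *)
Require Import Defs.
From HB Require Import structures.
From mathcomp Require Import all_boot all_order all_algebra.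
From mathcomp Require Import all_classical all_reals all_analysis.
From mathcomp Require Import ring lra.
Import Order.TTheory GRing.Theory Num.Theory.
Import numFieldNormedType.Exports.
Local Open Scope classical_set_scope.
Local Open Scope ring_scope.

Module RH.
Set Implicit Arguments. Unset Strict Implicit. Unset Printing Implicit Defensive.

Section Abs.
Variables (R : realFieldType) (V : lmodType R) (ip : V -> V -> R).
Hypothesis ipDl : forall u v w, ip (u + v) w = ip u w + ip v w.
Hypothesis ipZl : forall a u w, ip (a *: u) w = a * ip u w.
Hypothesis ipC : forall u v, ip u v = ip v u.
Hypothesis ip_ge0 : forall u, 0 <= ip u u.

Lemma ipDr u v w : ip w (u + v) = ip w u + ip w v.
Proof. by rewrite ipC ipDl ipC (ipC v). Qed.
Lemma ipZr a u w : ip w (a *: u) = a * ip w u.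
Proof. by rewrite ipC ipZl ipC. Qed.
Lemma ipNl u w : ip (- u) w = - ip u w.
Proof. by rewrite -scaleN1r ipZl mulN1r. Qed.
Lemma ipNr u w : ip w (- u) = - ip w u.
Proof. by rewrite ipC ipNl ipC. Qed.
Lemma ipBl u v w : ip (u - v) w = ip u w - ip v w.
Proof. by rewrite ipDl ipNl. Qed.
Lemma ipBr u v w : ip w (u - v) = ip w u - ip w v.
Proof. by rewrite ipDr ipNr. Qed.

Section LC.
Variables b1 b2 b3 : V.
Definition lc (c1 c2 c3 : R) := c1 *: b1 + c2 *: b2 + c3 *: b3.
Lemma ip_lc c1 c2 c3 d1 d2 d3 : ip (lc c1 c2 c3) (lc d1 d2 d3) =
  c1 * d1 * ip b1 b1 + c2 * d2 * ip b2 b2 + c3 * d3 * ip b3 b3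
  + (c1 * d2 + c2 * d1) * ip b1 b2 + (c1 * d3 + c3 * d1) * ip b1 b3
  + (c2 * d3 + c3 * d2) * ip b2 b3.
Proof.
rewrite /lc !(ipDl, ipDr, ipZl, ipZr).
rewrite (ipC b2 b1) (ipC b3 b1) (ipC b3 b2). ring.
Qed.
End LC.

Definition sqn u := ip u u.

Ltac ipexp := rewrite /sqn ?(ipDl, ipDr, ipZl, ipZr, ipNl, ipNr).

Lemma small_pos (a b : R) : 0 <= b -> (forall s, 0 < s -> s <= 1 -> 2 * a <= s * b) -> a <= 0.
Proof.
move=> b0 Hs; rewrite leNgt; apply/negP => a0.
have ab0 : 0 < a + b by lra.
have h1 : a / (a + b) <= 1 by rewrite ler_pdivrMr // mul1r; lra.
have := Hs (a / (a + b)) (divr_gt0 a0 ab0) h1.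
have -> : a / (a + b) * b = a * (b / (a + b)) by rewrite mulrAC mulrA.
have : b / (a + b) < 1 by rewrite ltr_pdivrMr // mul1r; lra.
move=> h2 h3.
have : a * (b / (a + b)) < a * 1 by rewrite ltr_pM2l.
lra.
Qed.

Lemma var_ineq (S : V -> Prop) z p :
  (forall x y lam, S x -> S y -> 0 <= lam -> lam <= 1 -> S (lam *: x + (1 - lam) *: y)) ->
  S p -> (forall y, S y -> sqn (z - p) <= sqn (z - y)) ->
  forall w, S w -> ip (z - p) (w - p) <= 0.
Proof.
move=> cS Sp Hmin w Sw.
apply: (small_pos (ip_ge0 (w - p))) => s s0 s1.
have H := Hmin _ (cS _ _ s Sw Sp (ltW s0) s1).
suff : s * (2 * ip (z - p) (w - p)) <= s * (s * ip (w - p) (w - p)) by rewrite (ler_pM2l s0).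
move: H; ipexp. rewrite ?(ipC w z) ?(ipC p z) ?(ipC p w).
lra.
Qed.


Section Opt.
Variables (S : V -> Prop) (C : V -> R) (g : V -> V) (L al : R).
Hypothesis cS : forall x y lam, S x -> S y -> 0 <= lam -> lam <= 1 ->
  S (lam *: x + (1 - lam) *: y).
Hypothesis upper : forall x z, C z <= C x + ip (g x) (z - x) + L / 2 * sqn (z - x).
Hypothesis lower : forall x z, C x + ip (g x) (z - x) + al / 2 * sqn (z - x) <= C z.
Hypothesis al0 : 0 < al.
Hypothesis alL : al <= L.

Definition step y p := S p /\
  forall z, S z -> sqn (y - L^-1 *: g y - p) <= sqn (y - L^-1 *: g y - z).

Lemma L0 : 0 < L. Proof. exact: lt_le_trans al0 alL. Qed.

Lemma key y p w : step y p -> S w ->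
  C p <= C w + L * ip (y - p) (y - w) - L / 2 * sqn (y - p) - al / 2 * sqn (y - w).
Proof.
move=> [Sp Hm] Sw.
have vi := var_ineq cS Sp Hm Sw.
have u := upper y p. have lo := lower y w.
have vi' : L * ip (y - L^-1 *: g y - p) (w - p) <= 0.
  by rewrite pmulr_rle0 // L0.
move: vi' u lo; ipexp.
rewrite ?(ipC w y) ?(ipC p y) ?(ipC p w) ?(ipC (g y) y) ?(ipC (g y) w) ?(ipC (g y) p).
rewrite ?(ipC y (g y)) ?(ipC w (g y)) ?(ipC p (g y)).
have LL : L * L^-1 = 1 by rewrite mulfV // gt_eqF // L0.
rewrite !mulrDr !mulrN !mulrA LL !mul1r.
lra.
Qed.

Lemma sconv u w s : 0 <= s -> s <= 1 ->
  C (s *: u + (1 - s) *: w) <= s * C u + (1 - s) * C w - al / 2 * (s * (1 - s)) * sqn (u - w).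
Proof.
move=> s0 s1.
set m := s *: u + (1 - s) *: w.
have h1 := lower m u. have h2 := lower m w.
have e1 : s * (C m + ip (g m) (u - m) + al / 2 * sqn (u - m)) <= s * C u by rewrite ler_wpM2l.
have e2 : (1 - s) * (C m + ip (g m) (w - m) + al / 2 * sqn (w - m)) <= (1 - s) * C w
  by rewrite ler_wpM2l // subr_ge0.
move: e1 e2; rewrite /m; ipexp.
rewrite ?(ipC w u) ?(ipC (g m) u) ?(ipC (g m) w) ?(ipC w (g m)) ?(ipC u (g m)).
rewrite /m.
move=> e1 e2.
nra.
Qed.


Lemma three_point y p w : step y p -> S w ->
  C p <= C w + (L - al) / 2 * sqn (y - w) - L / 2 * sqn (p - w).
Proof.
move=> st Sw; have := key st Sw; ipexp.
rewrite ?(ipC w y) ?(ipC p y) ?(ipC p w).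
lra.
Qed.

Lemma gd_rate x p w : S x -> S w -> step x p ->
  C p - C w <= (1 - al / L) * (C x - C w).
Proof.
move=> Sx Sw st.
have L0' := L0.
set s := al / L.
have s0 : 0 <= s by rewrite /s divr_ge0 // ltW.
have s1 : s <= 1 by rewrite /s ler_pdivrMr // mul1r.
have eal : al = L * s by rewrite /s mulrC mulfVK // gt_eqF.
have Sw' := cS Sw Sx s0 s1.
have k := key st Sw'.
have sc := sconv w x s0 s1.
have nn : 0 <= L / 2 * sqn ((x - p) - s *: (x - w)).
  by apply: mulr_ge0; [apply: divr_ge0; [apply: ltW|]|apply: ip_ge0].
move: k sc nn; rewrite eal; ipexp.
rewrite ?(ipC w x) ?(ipC p x) ?(ipC p w).
lra.
Qed.

Section Nest.
Variables (xs ys : nat -> V) (rho : R).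
Hypothesis rho0 : 0 < rho.
Hypothesis rho1 : rho <= 1.
Hypothesis erho : al = rho ^+ 2 * L.
Let lam := (1 - rho) / (1 + rho).
Hypothesis Sx0 : S (xs 0).
Hypothesis y0 : ys 0 = xs 0.
Hypothesis stk : forall k, step (ys k) (xs k.+1).
Hypothesis yS : forall k, ys k.+1 = xs k.+1 + lam *: (xs k.+1 - xs k).

Definition xp k := if k is k'.+1 then xs k' else xs 0.
Lemma ys_eq k : ys k = xs k + lam *: (xs k - xp k).
Proof. case: k => [|k] /=; last exact: yS. by rewrite y0 subrr scaler0 addr0. Qed.
Definition vv k := xp k + rho^-1 *: (xs k - xp k).
Definition Phi w k := C (xs k) - C w + al / 2 * sqn (vv k - w).

Lemma Sxs k : S (xs k).
Proof. by case: k => [|k] //; case: (stk k). Qed.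

Lemma nest_step w k : S w -> Phi w k.+1 <= (1 - rho) * Phi w k.
Proof.
move=> Sw.
have k1 := key (stk k) Sw. have k2 := key (stk k) (Sxs k).
set y := ys k in k1 k2. set x' := xs k.+1 in k1 k2.
pose R1 := C w + L * ip (y - x') (y - w) - L / 2 * sqn (y - x') - al / 2 * sqn (y - w).
pose R2 := C (xs k) + L * ip (y - x') (y - xs k) - L / 2 * sqn (y - x') - al / 2 * sqn (y - xs k).
have E : (1 - rho) * Phi w k - Phi w k.+1 =
   rho * (R1 - C x') + (1 - rho) * (R2 - C x') + al / 2 * rho * (1 - rho) * sqn (vv k - y)
   + (1 - rho) * (al / 2 * sqn (y - xs k)).
  rewrite /Phi /R1 /R2 /y ys_eq /vv /x' /=.
  ipexp.
  rewrite ?(ipC (xp k) (xs k)) ?(ipC w (xs k)) ?(ipC (xs k.+1) (xs k))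
          ?(ipC w (xp k)) ?(ipC (xs k.+1) (xp k)) ?(ipC (xs k.+1) w).
  rewrite erho /lam.
  field.
  by rewrite !gt_eqF ?addr_gt0 ?ltr01.
have r1 : 0 <= 1 - rho by rewrite subr_ge0.
have al0' : 0 <= al / 2 by apply: divr_ge0; [apply: ltW|].
have n1 : 0 <= al / 2 * rho * (1 - rho) * sqn (vv k - y).
  by apply: mulr_ge0; [apply: mulr_ge0; [apply: mulr_ge0; [|apply: ltW]|]|apply: ip_ge0].
have n2 : 0 <= (1 - rho) * (al / 2 * sqn (y - xs k)).
  by apply: mulr_ge0 => //; apply: mulr_ge0 => //; apply: ip_ge0.
have n3 : 0 <= rho * (R1 - C x') by apply: mulr_ge0; [apply: ltW|rewrite subr_ge0].
have n4 : 0 <= (1 - rho) * (R2 - C x') by apply: mulr_ge0 => //; rewrite subr_ge0.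
lra.
Qed.

Lemma Phi_ge w k : C (xs k) - C w <= Phi w k.
Proof.
rewrite /Phi lerDl; apply: mulr_ge0; last exact: ip_ge0.
by apply: divr_ge0; [apply: ltW|].
Qed.

Lemma nesterov w k : S w ->
  C (xs k) - C w <= (1 - rho) ^+ k * (C (xs 0) - C w + al / 2 * sqn (xs 0 - w)).
Proof.
move=> Sw.
have -> : C (xs 0) - C w + al / 2 * sqn (xs 0 - w) = Phi w 0.
  by rewrite /Phi /vv /= subrr scaler0 addr0.
apply: le_trans (Phi_ge w k) _.
have r1 : 0 <= 1 - rho by rewrite subr_ge0.
elim: k => [|k IH]; first by rewrite expr0 mul1r.
apply: le_trans (nest_step k Sw) _.
by rewrite exprS -mulrA ler_wpM2l.
Qed.
End Nest.
End Opt.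
End Abs.


Lemma squeeze (R : realFieldType) (c B V : R) : 0 <= c -> 0 <= B ->
  (forall eps, 0 < eps -> exists A, 0 <= A /\ V <= c * (B + A) + eps /\
       forall s, 0 < s -> s < 1 -> s * (1 - s) * A <= s * B + eps) ->
  V <= 2 * c * B.
Proof.
move=> c0 B0 H; apply/ler_addgt0Pr => e e0.
have cB : 0 <= c * B by apply: mulr_ge0.
have den0 : 0 < 4 * (c * B) + 2 * e + 1 by lra.
pose s := e / (4 * (c * B) + 2 * e + 1).
have es : s * (4 * (c * B) + 2 * e + 1) = e by rewrite /s divfK // gt_eqF.
have s0 : 0 < s by rewrite /s divr_gt0.
have p1 : 0 <= s * (2 * e + 1) by apply: mulr_ge0; lra.
have p2 : 0 <= s * (4 * (c * B)) by apply: mulr_ge0; lra.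
have s4 : s * (4 * (c * B)) <= e by move: es; rewrite !mulrDr; lra.
have s2e : s * (2 * e) <= e by move: es; rewrite !mulrDr; lra.
have sh : s <= 1 / 2.
  have : (s * 2) * e <= 1 * e by rewrite mul1r -mulrA.
  by rewrite ler_pM2r // -ler_pdivlMr.
have s1 : s < 1 by lra.
have c8 : 0 < 8 * (c + 1) by lra.
pose eps := s * e / (8 * (c + 1)).
have ee : eps * (8 * (c + 1)) = s * e by rewrite /eps divfK // gt_eqF.
have eps0 : 0 < eps by rewrite /eps divr_gt0 // mulr_gt0.
have [A [A0 [HV HA]]] := H eps eps0.
have HAs := HA s s0 s1.
have q0 : 0 < s * (1 - s) by apply: mulr_gt0; lra.
have ce : 0 <= c * eps by apply: mulr_ge0 => //; apply: ltW.
clearbody s eps.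
have t1 : c * eps <= s * e / 8 by move: ee; rewrite !mulrDr; lra.
have t2 : s * s * (c * B) <= s * e / 4.
  have : s * (s * (4 * (c * B))) <= s * e by apply: ler_wpM2l => //; apply: ltW.
  rewrite !mulrA; lra.
have t3 : e * (s * s) <= e * s / 2.
  have : 0 <= e * s * (1 / 2 - s) by apply: mulr_ge0; [apply: mulr_ge0; apply: ltW|lra].
  rewrite mulrBr !mulrA; lra.
have h1 : c * (s * (1 - s) * A) <= c * (s * B + eps) by apply: ler_wpM2l.
have key : (s * (1 - s)) * (c * A) <= (s * (1 - s)) * (c * B + 3 / 4 * e).
  move: h1; rewrite ?mulrDr ?mulrBr ?mulrBl ?mulrA. lra.
have cA : c * A <= c * B + 3 / 4 * e by rewrite -(ler_pM2l q0).
have se : s * e <= e / 2.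
  have : s * e <= (1 / 2) * e by rewrite ler_pM2r.
  lra.
move: ee HV; rewrite !mulrDr mulr1 mulrDr. lra.
Qed.

Lemma bernoulli (R : realFieldType) (a : R) j : 0 <= a -> a <= 1 ->
  (1 - a) ^+ j * (1 + j%:R * a) <= 1.
Proof.
move=> a0 a1; elim: j => [|j IH]; first by rewrite expr0 mul0r addr0 mul1r.
have p : 0 <= (1 - a) ^+ j by apply: exprn_ge0; lra.
have h : (1 - a) * (1 + j.+1%:R * a) <= 1 + j%:R * a.
  rewrite -addn1 natrD mulrDl mul1r.
  have : 0 <= j%:R * a * a by apply: mulr_ge0 => //; apply: mulr_ge0.
  have : 0 <= a * a by apply: mulr_ge0.
  rewrite ?mulrDr ?mulrBl ?mul1r. lra.
rewrite exprS -mulrA mulrCA.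
apply: le_trans IH; by apply: ler_wpM2l.
Qed.

Lemma geom_small (R : archiFieldType) (a M eps : R) : 0 < a -> a <= 1 -> 0 <= M -> 0 < eps ->
  exists j, (1 - a) ^+ j * M <= eps.
Proof.
move=> a0 a1 M0 e0.
have ae : 0 < a * eps by apply: mulr_gt0.
have q0 : 0 <= M / (a * eps) by apply: divr_ge0 => //; apply: ltW.
have hb := Num.Theory.archi_boundP q0.
set j := Num.bound (M / (a * eps)) in hb.
exists j.
have hM : M <= (1 + j%:R * a) * eps.
  have : M < j%:R * (a * eps) by rewrite -ltr_pdivrMr.
  rewrite mulrDl mul1r mulrA. lra.
have p : 0 <= (1 - a) ^+ j by apply: exprn_ge0; lra.
apply: le_trans (ler_wpM2l p hM) _.
rewrite mulrA -[X in _ <= X]mul1r ler_wpM2r //; first by apply: ltW.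
by apply: bernoulli => //; apply: ltW.
Qed.


Section Dot.
Variables (R : realType) (n : nat).
Notation vec := 'rV[R]_n.

Lemma dotvDl (u v w : vec) : dotv (u + v) w = dotv u w + dotv v w.
Proof. by rewrite /dotv -big_split; apply: eq_bigr => i _; rewrite mxE mulrDl. Qed.
Lemma dotvZl a (u w : vec) : dotv (a *: u) w = a * dotv u w.
Proof. by rewrite /dotv mulr_sumr; apply: eq_bigr => i _; rewrite mxE mulrA. Qed.
Lemma dotvC (u v : vec) : dotv u v = dotv v u.
Proof. by apply: eq_bigr => i _; rewrite mulrC. Qed.
Lemma dotv_ge0 (u : vec) : 0 <= dotv u u.
Proof. by apply: sumr_ge0 => i _; rewrite -expr2 sqr_ge0. Qed.

Lemma enorm_ge0 (u : vec) : 0 <= enorm u.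
Proof. exact: sqrtr_ge0. Qed.
Lemma enorm_sq (u : vec) : enorm u ^+ 2 = dotv u u.
Proof. by rewrite /enorm sqr_sqrtr // dotv_ge0. Qed.

Lemma dotvN (u w : vec) : dotv (- u) w = - dotv u w.
Proof. exact: (ipNl dotvZl). Qed.

Lemma enormN (u : vec) : enorm (- u) = enorm u.
Proof. by rewrite /enorm (ipNl dotvZl) (ipNr dotvZl dotvC) opprK. Qed.

Lemma enorm_sub (u v : vec) : enorm (u - v) = enorm (v - u).
Proof. by rewrite -enormN opprB. Qed.

Lemma cs (u v : vec) : dotv u v <= enorm u * enorm v.
Proof.
have key : forall c, 0 < c -> 2 * dotv u v <= c * dotv u u + c^-1 * dotv v v.
  move=> c c0.
  have h := dotv_ge0 (c *: u - v).
  move: h; rewrite !(dotvDl, (ipDr dotvDl dotvC), dotvZl, (ipZr dotvZl dotvC), dotvN, (ipNr dotvZl dotvC)).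
  rewrite (dotvC v u) => h.
  have h2 : 0 <= c^-1 * (c * (c * dotv u u) - c * dotv u v - (c * dotv u v - dotv v v)).
    by apply: mulr_ge0; [rewrite invr_ge0 ltW|lra].
  have cc : c^-1 * c = 1 by rewrite mulVf // gt_eqF.
  have e : c^-1 * (c * dotv u v) = dotv u v by rewrite mulKf // gt_eqF.
  move: h2; rewrite !(mulrDr, mulrBr) !mulrA cc !mul1r. lra.
have nu := enorm_ge0 u; have nv := enorm_ge0 v.
have su := enorm_sq u; have sv := enorm_sq v.
have [u0|u0] := eqVneq (enorm u) 0.
  rewrite u0 mul0r.
  have du : dotv u u = 0 by rewrite -su u0 expr0n.
  apply: (small_pos (dotv_ge0 v)) => s s0 s1.
  have hs : 0 < s^-1 by rewrite invr_gt0.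
  have := key _ hs. by rewrite du mulr0 add0r invrK.
have [v0|v0] := eqVneq (enorm v) 0.
  rewrite v0 mulr0.
  have dv : dotv v v = 0 by rewrite -sv v0 expr0n.
  apply: (small_pos (dotv_ge0 u)) => s s0 s1.
  have := key s s0. by rewrite dv mulr0 addr0.
have pu : 0 < enorm u by rewrite lt_def u0.
have pv : 0 < enorm v by rewrite lt_def v0.
have := key (enorm v / enorm u) (divr_gt0 pv pu).
rewrite invf_div -su -sv.
have -> : enorm v / enorm u * enorm u ^+ 2 = enorm u * enorm v.
  by rewrite expr2 mulrA divfK ?gt_eqF // mulrC.
have -> : enorm u / enorm v * enorm v ^+ 2 = enorm u * enorm v.
  by rewrite expr2 mulrA divfK ?gt_eqF.
lra.
Qed.

Lemma enorm_triangle (u v : vec) : enorm (u + v) <= enorm u + enorm v.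
Proof.
have h : enorm (u + v) ^+ 2 <= (enorm u + enorm v) ^+ 2.
  rewrite enorm_sq sqrrD !enorm_sq dotvDl !(ipDr dotvDl dotvC) (dotvC v u).
  have := cs u v. lra.
rewrite -(ler_pXn2r (n:=2)) // ?nnegrE ?addr_ge0 ?enorm_ge0 //.
Qed.

End Dot.


Section Main.
Variables (R : realType) (n : nat).
Notation vec := 'rV[R]_n.
Variables (X : set vec) (beta : R) (x0 : vec) (T : nat) (alpha l G : R)
  (proj : vec -> vec) (f : nat -> vec -> R) (theta : nat -> vec).
Hypothesis convX : convexS X.
Hypothesis beta0 : 0 <= beta.
Hypothesis Xx0 : X x0.
Hypothesis T1 : (1 <= T)%N.
Hypothesis alpha0 : 0 < alpha.
Hypothesis alphal : alpha <= l.
Hypothesis G0 : 0 < G.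
Hypothesis projP : forall z, is_proj X z (proj z).
Hypothesis fclass : forall t, (1 <= t <= T)%N -> in_class X alpha l G (f t).
Hypothesis thmin : forall t, (1 <= t <= T)%N -> is_argmin X (f t) (theta t).

Ltac dexp := rewrite ?(dotvDl, (ipDr (@dotvDl _ _) (@dotvC _ _)), dotvZl,
  (ipZr (@dotvZl _ _) (@dotvC _ _)), dotvN, (ipNr (@dotvZl _ _) (@dotvC _ _))).

Lemma dotv0r (u : vec) : dotv u 0 = 0.
Proof. by rewrite /dotv big1 // => i _; rewrite mxE mulr0. Qed.
Lemma dotv0l (u : vec) : dotv 0 u = 0.
Proof. by rewrite dotvC dotv0r. Qed.

Definition V := (nat -> vec).
Definition ipT (u v : V) := \sum_(1 <= t < T.+1) dotv (u t) (v t).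
Lemma ipTDl u v w : ipT (u + v) w = ipT u w + ipT v w.
Proof. by rewrite /ipT -big_split; apply: eq_bigr => i _; rewrite dotvDl. Qed.
Lemma ipTZl a u w : ipT (a *: u) w = a * ipT u w.
Proof. by rewrite /ipT mulr_sumr; apply: eq_bigr => i _; rewrite dotvZl. Qed.
Lemma ipTC u v : ipT u v = ipT v u.
Proof. by apply: eq_bigr => i _; rewrite dotvC. Qed.
Lemma ipT_ge0 u : 0 <= ipT u u.
Proof. by apply: sumr_ge0 => i _; apply: dotv_ge0. Qed.

Definition SX (u : V) := forall t, (1 <= t <= T)%N -> X (u t).
Lemma convSX : forall x y lam, SX x -> SX y -> 0 <= lam -> lam <= 1 ->
  SX (lam *: x + (1 - lam) *: y).
Proof. by move=> x y lam Sx Sy l0 l1 t Ht; apply: convX => //; [apply: Sx|apply: Sy]. Qed.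

Definition Cc := cost f beta x0 T.
Definition gC (x : V) : V := fun t => pgrad f beta T t (prevpt x0 x t) (x t) (x t.+1).

Lemma prevpt_sub (z x : V) t : prevpt x0 z t - prevpt x0 x t = prevpt 0 (z - x) t.
Proof. by case: t => [|[|t]] /=; rewrite ?subrr. Qed.
Lemma prevpt_S (x0' : vec) (x : V) t : (1 <= t)%N -> prevpt x0' x t.+1 = x t.
Proof. by case: t. Qed.

Lemma reindex (F : nat -> vec -> R) (h : V) : (forall t, F t 0 = 0) ->
  \sum_(1 <= t < T.+1) F t (prevpt 0 h t) = \sum_(1 <= t < T) F t.+1 (h t).
Proof.
move=> F0; rewrite big_nat_recl // (_ : prevpt 0 h 1 = 0) // F0 add0r.
by apply: eq_big_nat => t /andP[t1 _]; rewrite prevpt_S.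
Qed.


Definition Fd t (x z : V) := f t (z t) - f t (x t) - dotv (grad (f t) (x t)) (z t - x t).
Definition ee (h : V) t := h t - prevpt 0 h t.

Ltac norm6 a b c d e g :=
  rewrite ?(dotvC b a) ?(dotvC c a) ?(dotvC d a) ?(dotvC e a) ?(dotvC g a)
          ?(dotvC c b) ?(dotvC d b) ?(dotvC e b) ?(dotvC g b)
          ?(dotvC d c) ?(dotvC e c) ?(dotvC g c)
          ?(dotvC e d) ?(dotvC g d) ?(dotvC g e).

Lemma cost_expand x z : Cc z = Cc x + ipT (gC x) (z - x)
  + \sum_(1 <= t < T.+1) Fd t x z
  + beta / 2 * \sum_(1 <= t < T.+1) dotv (ee (z - x) t) (ee (z - x) t).
Proof.
set h := z - x.
pose dx t := x t - prevpt x0 x t.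
have per : forall t, (1 <= t < T.+1)%N ->
  (f t (z t) + beta / 2 * enorm (z t - prevpt x0 z t) ^+ 2)
  - (f t (x t) + beta / 2 * enorm (x t - prevpt x0 x t) ^+ 2)
  - dotv (gC x t) (h t) - Fd t x z - beta / 2 * dotv (ee h t) (ee h t)
  = beta * (dotv (dx t) (h t) - dotv (dx t) (prevpt 0 h t)
     - (if (t < T)%N then dotv (dx t) (h t) - dotv (dx t.+1) (h t)
        else dotv (dx t) (h t))).
  move=> t /andP[t1 tT]. rewrite !enorm_sq /gC /pgrad /Fd /ee /dx.
  rewrite -prevpt_sub.
  have ht : h t = z t - x t by [].
  rewrite ht.
  case: ifP => tlt; rewrite ?prevpt_S //; dexp;
  norm6 (grad (f t) (x t)) (z t) (x t) (prevpt x0 z t) (prevpt x0 x t) (x t.+1).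
 2: lra. 1: lra.
have S0 : \sum_(1 <= t < T.+1) beta * (dotv (dx t) (h t) - dotv (dx t) (prevpt 0 h t)
     - (if (t < T)%N then dotv (dx t) (h t) - dotv (dx t.+1) (h t)
        else dotv (dx t) (h t))) = 0.
  rewrite -mulr_sumr !sumrB.
  rewrite (@reindex (fun t v => dotv (dx t) v) h); last by move=> t; rewrite dotv0r.
  rewrite [X in _ * (X - _ - _)]big_nat_recr // [X in _ * (_ - _ - X)]big_nat_recr //= ltnn.
  have E3 : \sum_(1 <= i < T) (if (i < T)%N then dotv (dx i) (h i) - dotv (dx i.+1) (h i)
       else dotv (dx i) (h i)) = \sum_(1 <= i < T) (dotv (dx i) (h i) - dotv (dx i.+1) (h i)).
    by apply: eq_big_nat => i /andP[_ iT]; rewrite iT.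
  rewrite E3.
  rewrite sumrB. apply/eqP; rewrite mulf_eq0; apply/orP; right; apply/eqP. lra.
rewrite /Cc /cost /ipT mulr_sumr.
apply/eqP; rewrite -subr_eq0; apply/eqP.
rewrite !opprD !addrA -!sumrB.
apply: (etrans _ S0).
by apply: eq_big_nat => t Ht; rewrite per.
Qed.


Lemma sum_prev (h : V) : \sum_(1 <= t < T.+1) dotv (prevpt 0 h t) (prevpt 0 h t)
  <= ipT h h.
Proof.
rewrite (@reindex (fun t v => dotv v v) h); last by move=> t; rewrite dotv0r.
rewrite /ipT big_nat_recr //= lerDl; exact: dotv_ge0.
Qed.

Lemma ee_bound (h : V) : \sum_(1 <= t < T.+1) dotv (ee h t) (ee h t) <= 4%:R * ipT h h.
Proof.
have H : forall t, dotv (ee h t) (ee h t) <= 2%:R * dotv (h t) (h t)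
    + 2%:R * dotv (prevpt 0 h t) (prevpt 0 h t).
  move=> t; have := dotv_ge0 (h t + prevpt 0 h t); rewrite /ee; dexp.
  rewrite (dotvC (prevpt 0 h t) (h t)); lra.
apply: le_trans (ler_sum_nat (fun t _ => H t)) _.
rewrite big_split /= -!mulr_sumr.
have := sum_prev h; rewrite /ipT. lra.
Qed.

Lemma Fd_bounds x z t : (1 <= t < T.+1)%N ->
  alpha / 2 * dotv (z t - x t) (z t - x t) <= Fd t x z <=
  l / 2 * dotv (z t - x t) (z t - x t).
Proof.
move=> /andP[t1 tT]; have Ht : (1 <= t <= T)%N by rewrite t1 -ltnS.
have [_ [H _]] := fclass Ht.
have [h1 h2] := H (x t) (z t); rewrite !enorm_sq in h1 h2.
rewrite /Fd; apply/andP; split; lra.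
Qed.

Lemma Cupper x z : Cc z <= Cc x + ipT (gC x) (z - x) + (l + 4%:R * beta) / 2 * sqn ipT (z - x).
Proof.
rewrite (cost_expand x z) /sqn.
have h1 : \sum_(1 <= t < T.+1) Fd t x z <= l / 2 * ipT (z - x) (z - x).
  rewrite /ipT mulr_sumr; apply: ler_sum_nat => t Ht.
  by have /andP[_ ->] := Fd_bounds x z Ht.
have h2 := ee_bound (z - x).
have h3 : beta / 2 * \sum_(1 <= t < T.+1) dotv (ee (z - x) t) (ee (z - x) t)
   <= beta / 2 * (4%:R * ipT (z - x) (z - x)).
  by rewrite ler_wpM2l // divr_ge0.
lra.
Qed.

Lemma Clower x z : Cc x + ipT (gC x) (z - x) + alpha / 2 * sqn ipT (z - x) <= Cc z.
Proof.
rewrite (cost_expand x z) /sqn.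
have h1 : alpha / 2 * ipT (z - x) (z - x) <= \sum_(1 <= t < T.+1) Fd t x z.
  rewrite /ipT mulr_sumr; apply: ler_sum_nat => t Ht.
  by have /andP[-> _] := Fd_bounds x z Ht.
have h3 : 0 <= beta / 2 * \sum_(1 <= t < T.+1) dotv (ee (z - x) t) (ee (z - x) t).
  by apply: mulr_ge0; [rewrite divr_ge0|apply: sumr_ge0 => t _; apply: dotv_ge0].
lra.
Qed.

Definition LL := l + 4%:R * beta.
Definition gam := l^-1.
Definition eta := LL^-1.

Lemma ogdX k : X (ogd proj f gam x0 k).
Proof. by case: k => [|k] //=; case: (projP (ogd proj f gam x0 k - gam *: grad (f k.+1) (ogd proj f gam x0 k))). Qed.

Lemma projX z : X (proj z). Proof. by case: (projP z). Qed.

Lemma proj_sq w z : X z -> dotv (w - proj w) (w - proj w) <= dotv (w - z) (w - z).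
Proof.
move=> Xz; rewrite -!enorm_sq ler_pXn2r // ?nnegrE ?enorm_ge0 //.
by case: (projP w) => _ /(_ _ Xz).
Qed.

Lemma prevpt_pred (y : V) t : y 0 = x0 -> (1 <= t)%N -> prevpt x0 y t = y t.-1.
Proof. by move=> y0; case: t => [|[|t]] //=. Qed.

Lemma step_gen (y p : V) : y 0 = x0 ->
  (forall t, (1 <= t <= T)%N -> p t = proj (y t - eta *: gC y t)) ->
  step ipT SX gC LL y p.
Proof.
move=> y0 Hp; split.
  by move=> t Ht; rewrite Hp //; apply: projX.
move=> z Sz; rewrite /sqn /ipT; apply: ler_sum_nat => t Ht.
have Ht' : (1 <= t <= T)%N by move: Ht; rewrite ltnS.
have -> : (y - LL^-1 *: gC y - p) t = (y t - eta *: gC y t) - p t by [].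
have -> : (y - LL^-1 *: gC y - z) t = (y t - eta *: gC y t) - z t by [].
rewrite Hp //.
exact: (proj_sq _ (Sz _ Ht')).
Qed.

Lemma alLL : alpha <= LL.
Proof. rewrite /LL; have : 0 <= 4%:R * beta by apply: mulr_ge0. have := alphal. lra. Qed.

Lemma gd_rateC x p w : SX x -> SX w -> step ipT SX gC LL x p ->
  Cc p - Cc w <= (1 - alpha / LL) * (Cc x - Cc w).
Proof. exact: (gd_rate ipTDl ipTZl ipTC ipT_ge0 convSX Cupper Clower alpha0 alLL). Qed.

Definition xg j : V := rhgd_it proj f beta gam eta x0 T j.

Lemma xg0 j : xg j 0 = x0. Proof. by case: j. Qed.

Lemma xg_step j : step ipT SX gC LL (xg j) (xg j.+1).
Proof.
apply: step_gen; first exact: xg0.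
move=> [|t] // Ht.
by rewrite /gC (prevpt_pred (xg0 j)).
Qed.

Lemma SX_xg j : SX (xg j).
Proof.
case: j => [|j]; last by case: (xg_step j).
by move=> [|t] // _; rewrite /xg /= /init /=; apply: ogdX.
Qed.

Lemma rhgd_gap j w : SX w ->
  Cc (xg j) - Cc w <= (1 - alpha / LL) ^+ j * (Cc (xg 0) - Cc w).
Proof.
move=> Sw; elim: j => [|j IH]; first by rewrite expr0 mul1r.
have r0 : 0 <= 1 - alpha / LL.
  rewrite subr_ge0 ler_pdivrMr ?mul1r; first exact: alLL.
  exact: lt_le_trans alpha0 alLL.
apply: le_trans (gd_rateC (SX_xg j) Sw (xg_step j)) _.
by rewrite exprS -mulrA ler_wpM2l.
Qed.

Lemma LL0 : 0 < LL. Proof. exact: lt_le_trans alpha0 alLL. Qed.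

Definition rho := Num.sqrt (alpha * eta).
Definition lam := (1 - rho) / (1 + rho).

Lemma rho_sq : rho ^+ 2 = alpha / LL.
Proof. by rewrite /rho sqr_sqrtr // mulr_ge0 // ?invr_ge0 ltW // ?LL0. Qed.
Lemma rho0 : 0 < rho.
Proof. by rewrite /rho sqrtr_gt0 mulr_gt0 // invr_gt0 LL0. Qed.
Lemma rho1 : rho <= 1.
Proof.
have h : rho ^+ 2 <= 1 ^+ 2.
  by rewrite rho_sq expr1n ler_pdivrMr ?mul1r ?LL0 // alLL.
by move: h; rewrite ler_pXn2r // ?nnegrE ?ler01 // ltW // rho0.
Qed.
Lemma erho : alpha = rho ^+ 2 * LL.
Proof. by rewrite rho_sq divfK // gt_eqF // LL0. Qed.

Definition xs k : V := fun t => (rhag_it proj f beta gam eta lam x0 T k t).1.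
Definition ys k : V := fun t => (rhag_it proj f beta gam eta lam x0 T k t).2.

Lemma ys0 k : ys k 0 = x0. Proof. by case: k. Qed.
Lemma xs0_eq : xs 0 = xg 0. Proof. by apply: boolp.funext => -[|t]. Qed.
Lemma y0_eq : ys 0 = xs 0. Proof. by apply: boolp.funext => -[|t]. Qed.
Lemma stk k : step ipT SX gC LL (ys k) (xs k.+1).
Proof.
apply: step_gen; first exact: ys0.
move=> [|t] // Ht.
by rewrite /gC (prevpt_pred (ys0 k)).
Qed.
Lemma yS k : ys k.+1 = xs k.+1 + lam *: (xs k.+1 - xs k).
Proof.
apply: boolp.funext => t.
change (ys k.+1 t = xs k.+1 t + lam *: (xs k.+1 t - xs k t)).
case: t => [|t].
  have := ys0 k; rewrite /ys /xs /= => _. by case: k => [|k] /=; rewrite subrr scaler0 addr0.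
by rewrite /xs /ys /= scalerDl scale1r scalerBr addrA.
Qed.

Lemma SX0 : SX (xs 0). Proof. by rewrite xs0_eq; apply: SX_xg. Qed.

Lemma rhag_gap k w : SX w ->
  Cc (xs k) - Cc w <= (1 - rho) ^+ k * (Cc (xs 0) - Cc w + alpha / 2 * sqn ipT (xs 0 - w)).
Proof.
move=> Sw.
exact: (nesterov ipTDl ipTZl ipTC ipT_ge0 convSX Cupper Clower alpha0 alLL
   rho0 rho1 erho SX0 y0_eq stk yS).
Qed.

Definition o k := ogd proj f gam x0 k.
Definition kappa := Num.sqrt (1 - alpha / l).
Definition dd t := enorm (o t.-1 - theta t).
Definition pp t := enorm (theta t - prevpt x0 theta t).

Lemma l0 : 0 < l. Proof. exact: lt_le_trans alpha0 alphal. Qed.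

Lemma kappa_ge0 : 0 <= kappa. Proof. exact: sqrtr_ge0. Qed.
Lemma kappa_sq : kappa ^+ 2 = 1 - alpha / l.
Proof.
by rewrite /kappa sqr_sqrtr // subr_ge0 ler_pdivrMr ?mul1r ?alphal ?l0.
Qed.
Lemma kappa_lt1 : kappa < 1.
Proof.
have h : kappa ^+ 2 < 1 ^+ 2.
  rewrite kappa_sq expr1n; have : 0 < alpha / l by rewrite divr_gt0 // l0. lra.
by move: h; rewrite ltr_pXn2r // ?nnegrE ?ler01 // kappa_ge0.
Qed.

Section FK.
Variable k : nat.
Hypothesis Hk : (1 <= k <= T)%N.
Lemma fup x z : f k z <= f k x + dotv (grad (f k) x) (z - x) + l / 2 * sqn (@dotv R n) (z - x).
Proof. have [_ [H _]] := fclass Hk; have [_ h] := H x z; by rewrite /sqn -enorm_sq. Qed.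
Lemma flo x z : f k x + dotv (grad (f k) x) (z - x) + alpha / 2 * sqn (@dotv R n) (z - x) <= f k z.
Proof. have [_ [H _]] := fclass Hk; have [h _] := H x z; by rewrite /sqn -enorm_sq. Qed.

Lemma o_step : step (@dotv R n) X (grad (f k)) l (o k.-1) (o k).
Proof.
case: k Hk => [//|k'] _ /=; split; first exact: ogdX.
by move=> z Xz; rewrite /sqn /gam; apply: proj_sq.
Qed.

Lemma contraction : enorm (o k - theta k) <= kappa * enorm (o k.-1 - theta k).
Proof.
have [Xth thm] := thmin Hk.
have tp := three_point (@dotvDl _ _) (@dotvZl _ _) (@dotvC _ _) (@dotv_ge0 _ _) convX fup flo
   alpha0 alphal o_step Xth.
have hm := thm _ (ogdX k).
have h1 : l * sqn (@dotv R n) (o k - theta k) <= (l - alpha) * sqn (@dotv R n) (o k.-1 - theta k).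
  rewrite /o in tp hm *. lra.
have h2 : sqn (@dotv R n) (o k - theta k) <= kappa ^+ 2 * sqn (@dotv R n) (o k.-1 - theta k).
  rewrite kappa_sq -(ler_pM2l l0) mulrA mulrBr mulr1 mulrCA divff ?gt_eqF ?l0 // mulr1.
  exact: h1.
move: h2; rewrite /sqn -!enorm_sq -exprMn ler_pXn2r // ?nnegrE ?mulr_ge0 ?enorm_ge0 ?kappa_ge0 //.
Qed.

Lemma step_small : enorm (o k - o k.-1) ^+ 2 <= gam * G * enorm (o k - o k.-1).
Proof.
have st := o_step.
have Xp : X (o k.-1) by apply: ogdX.
case: st => Xo Hm.
have vi := var_ineq (@dotvDl _ _) (@dotvZl _ _) (@dotvC _ _) (@dotv_ge0 _ _) convX Xo Hm Xp.
have gG : enorm (grad (f k) (o k.-1)) <= G by have [_ [_ H]] := fclass Hk; apply: H.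
have c := cs (grad (f k) (o k.-1)) (o k.-1 - o k).
have g0 : 0 <= gam by rewrite /gam invr_ge0 ltW // l0.
have c2 : gam * dotv (grad (f k) (o k.-1)) (o k.-1 - o k) <= gam * (G * enorm (o k.-1 - o k)).
  by rewrite ler_wpM2l //; apply: le_trans c _; rewrite ler_wpM2r ?enorm_ge0.
rewrite enorm_sub enorm_sq -mulrA.
move: vi; rewrite /gam; dexp.
rewrite /gam in c2; move: c2; dexp.
rewrite (dotvC (o k) (o k.-1)).
lra.
Qed.

End FK.

Lemma dd_ge0 t : 0 <= dd t. Proof. exact: enorm_ge0. Qed.

Lemma dd_step t : (1 <= t < T)%N -> dd t.+1 <= kappa * dd t + pp t.+1.
Proof.
move=> /andP[t1 tT].
have Ht : (1 <= t <= T)%N by rewrite t1 ltnW.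
rewrite /pp prevpt_S // /dd /= (enorm_sub (theta t.+1)).
have -> : o t - theta t.+1 = (o t - theta t) + (theta t - theta t.+1) by rewrite addrA subrK.
apply: le_trans (enorm_triangle _ _) _.
rewrite lerD2r.
case: t t1 Ht {tT} => [//|t] _ Ht.
exact: contraction Ht.
Qed.

Lemma dd1 : dd 1 = pp 1.
Proof. by rewrite /dd /pp /= enorm_sub. Qed.

Lemma sum_dd m : (1 <= m <= T)%N ->
  (1 - kappa) * \sum_(1 <= t < m.+1) dd t + kappa * dd m <= \sum_(1 <= t < m.+1) pp t.
Proof.
elim: m => [//|m IH] Hm.
case: m IH Hm => [|m] IH Hm.
  by rewrite !big_nat1 dd1; lra.
have Hm' : (1 <= m.+1 <= T)%N by move: Hm => /andP[_ h]; apply/andP; split => //; apply: ltnW.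
rewrite [\sum_(1 <= t < m.+3) dd t]big_nat_recr // [\sum_(1 <= t < m.+3) pp t]big_nat_recr //=.
have := IH Hm'.
have := @dd_step m.+1 Hm.
have := kappa_ge0. lra.
Qed.

Lemma sum_dd_T : (1 - kappa) * \sum_(1 <= t < T.+1) dd t <= path_length x0 T theta.
Proof.
have HT : (1 <= T <= T)%N by rewrite T1 leqnn.
have := sum_dd HT.
have : 0 <= kappa * dd T by apply: mulr_ge0; [apply: kappa_ge0|apply: dd_ge0].
rewrite /path_length; lra.
Qed.

Lemma enorm0 : enorm (0 : vec) = 0.
Proof. by rewrite /enorm dotv0r sqrtr0. Qed.

Lemma xg0_t t : (1 <= t)%N -> xg 0 t = o t.-1.
Proof. by case: t. Qed.

Lemma f_gap t : (1 <= t <= T)%N -> f t (xg 0 t) - f t (theta t) <= G * dd t.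
Proof.
move=> Ht; have /andP[t1 _] := Ht.
rewrite xg0_t //.
have lo := flo Ht (o t.-1) (theta t).
have gG : enorm (grad (f t) (o t.-1)) <= G by have [_ [_ H]] := fclass Ht; apply: H; apply: ogdX.
have c := cs (grad (f t) (o t.-1)) (o t.-1 - theta t).
have c2 : enorm (grad (f t) (o t.-1)) * enorm (o t.-1 - theta t) <= G * dd t.
  by rewrite ler_wpM2r // /dd enorm_ge0.
have sq : 0 <= alpha / 2 * sqn (@dotv R n) (theta t - o t.-1).
  by apply: mulr_ge0; [apply: divr_ge0; [apply: ltW|]|apply: dotv_ge0].
move: lo c sq; rewrite -(opprB (o t.-1)) (ipNr (@dotvZl _ _) (@dotvC _ _)). lra.
Qed.

Lemma sw_bound : \sum_(1 <= t < T.+1) enorm (xg 0 t - prevpt x0 (xg 0) t) ^+ 2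
   <= gam * G * (1 + kappa) * \sum_(1 <= t < T.+1) dd t.
Proof.
rewrite big_nat_recl // (_ : xg 0 1 - prevpt x0 (xg 0) 1 = 0); last first.
  by rewrite /= subrr.
rewrite enorm0 expr0n /= add0r.
have H : forall t, (1 <= t < T)%N ->
   enorm (xg 0 t.+1 - prevpt x0 (xg 0) t.+1) ^+ 2 <= gam * G * (1 + kappa) * dd t.
  move=> t /andP[t1 tT].
  have Ht : (1 <= t <= T)%N by rewrite t1 ltnW.
  rewrite prevpt_S // xg0_t // xg0_t //=.
  have ss := step_small Ht.
  have tri : enorm (o t - o t.-1) <= (1 + kappa) * dd t.
    have -> : o t - o t.-1 = (o t - theta t) + (theta t - o t.-1) by rewrite addrA subrK.
    apply: le_trans (enorm_triangle _ _) _.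
    have c : enorm (o t - theta t) <= kappa * dd t := contraction Ht.
    have e : enorm (theta t - o t.-1) = dd t by rewrite /dd enorm_sub.
    rewrite e; lra.
  have g0 : 0 <= gam * G by rewrite mulr_ge0 // ?invr_ge0 ltW // ?l0.
  apply: le_trans ss _; rewrite -[gam * G * (1 + kappa) * dd t]mulrA; idtac.
  by apply: ler_wpM2l.
apply: le_trans (ler_sum_nat H) _.
rewrite -mulr_sumr ler_wpM2l //.
  apply: mulr_ge0; last by have := kappa_ge0; lra.
  by rewrite mulr_ge0 // ?invr_ge0 ltW // ?l0.
by rewrite big_nat_recr //= lerDl; exact: dd_ge0.
Qed.

Lemma init_gap w : SX w ->
  Cc (xg 0) - Cc w <= (1 + beta * gam) * G * \sum_(1 <= t < T.+1) dd t.
Proof.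
move=> Sw.
have Cw : \sum_(1 <= t < T.+1) f t (theta t) <= Cc w.
  rewrite /Cc /cost; apply: ler_sum_nat => t Ht.
  have Ht' : (1 <= t <= T)%N by move: Ht; rewrite ltnS.
  have [_ thm] := thmin Ht'.
  have := thm _ (Sw _ Ht').
  have : 0 <= beta / 2 * enorm (w t - prevpt x0 w t) ^+ 2.
    by apply: mulr_ge0; [rewrite divr_ge0|rewrite exprn_ge0 // enorm_ge0].
  lra.
have Fg : \sum_(1 <= t < T.+1) f t (xg 0 t) - \sum_(1 <= t < T.+1) f t (theta t)
    <= G * \sum_(1 <= t < T.+1) dd t.
  rewrite -sumrB mulr_sumr; apply: ler_sum_nat => t Ht.
  by apply: f_gap; move: Ht; rewrite ltnS.
have sw := sw_bound.
have Cx : Cc (xg 0) = \sum_(1 <= t < T.+1) f t (xg 0 t)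
   + beta / 2 * \sum_(1 <= t < T.+1) enorm (xg 0 t - prevpt x0 (xg 0) t) ^+ 2.
  by rewrite /Cc /cost big_split /= mulr_sumr.
set S := \sum_(1 <= t < T.+1) dd t in Fg sw *.
have S0 : 0 <= S by apply: sumr_ge0 => t _; apply: dd_ge0.
have g0 : 0 <= gam by rewrite invr_ge0 ltW // l0.
have b2 : beta / 2 * \sum_(1 <= t < T.+1) enorm (xg 0 t - prevpt x0 (xg 0) t) ^+ 2
   <= beta / 2 * (gam * G * (1 + kappa) * S) by rewrite ler_wpM2l // divr_ge0.
have k1 : beta * gam * G * S * kappa <= beta * gam * G * S.
  rewrite ler_piMr //; first by rewrite !mulr_ge0 // ltW.
  exact: ltW kappa_lt1.
rewrite Cx. lra.
Qed.

Lemma init_gap_LT w LT : SX w -> path_length x0 T theta <= LT ->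
  Cc (xg 0) - Cc w <= (beta / l + 1) * (G / (1 - kappa)) * LT.
Proof.
move=> Sw PL.
apply: le_trans (init_gap Sw) _.
have k1 : 0 < 1 - kappa by have := kappa_lt1; lra.
have hS : \sum_(1 <= t < T.+1) dd t <= LT / (1 - kappa).
  rewrite ler_pdivlMr // mulrC; exact: le_trans sum_dd_T PL.
have c0 : 0 <= (1 + beta * gam) * G by rewrite mulr_ge0 // ?addr_ge0 ?mulr_ge0 // ?invr_ge0 ltW // ?l0.
have -> : (beta / l + 1) * (G / (1 - kappa)) * LT = (1 + beta * gam) * G * (LT / (1 - kappa)).
  by rewrite /gam; field; rewrite !gt_eqF ?l0.
by rewrite ler_wpM2l.
Qed.

Definition delta := (beta / l + 1) * (G / (1 - kappa)).

Lemma delta_ge0 : 0 <= delta.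
Proof.
have k1 : 0 < 1 - kappa by have := kappa_lt1; lra.
apply: mulr_ge0; last by apply: divr_ge0; apply: ltW.
by apply: addr_ge0 => //; apply: divr_ge0 => //; apply: ltW; apply: l0.
Qed.

Lemma Cw_lb w : SX w -> \sum_(1 <= t < T.+1) f t (theta t) <= Cc w.
Proof.
move=> Sw; rewrite /Cc /cost; apply: ler_sum_nat => t Ht.
have Ht' : (1 <= t <= T)%N by move: Ht; rewrite ltnS.
have [_ thm] := thmin Ht'.
have := thm _ (Sw _ Ht').
have : 0 <= beta / 2 * enorm (w t - prevpt x0 w t) ^+ 2.
  by apply: mulr_ge0; [rewrite divr_ge0|rewrite exprn_ge0 // enorm_ge0].
lra.
Qed.

Lemma r_bounds : 0 <= 1 - alpha / LL /\ 0 < alpha / LL /\ alpha / LL <= 1.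
Proof.
have L0' := LL0.
have a1 : alpha / LL <= 1 by rewrite ler_pdivrMr // mul1r alLL.
split; first by lra.
by split => //; rewrite divr_gt0.
Qed.

Lemma final_rhgd W LT w : SX w -> path_length x0 T theta <= LT -> 0 <= LT ->
  Cc (xg W) - Cc w <= LL / alpha * delta * (1 - (LL / alpha)^-1) ^+ W * LT.
Proof.
move=> Sw PL LT0.
have [r0 [a0 a1]] := r_bounds.
rewrite invf_div.
apply: le_trans (rhgd_gap W Sw) _.
have p : 0 <= (1 - alpha / LL) ^+ W by apply: exprn_ge0.
apply: le_trans (ler_wpM2l p (init_gap_LT Sw PL)) _.
have Q1 : 1 <= LL / alpha by rewrite ler_pdivlMr // mul1r alLL.
have h0 : 0 <= (1 - alpha / LL) ^+ W * (delta * LT).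
  by apply: mulr_ge0 => //; apply: mulr_ge0 => //; exact: delta_ge0.
rewrite -/delta.
have -> : LL / alpha * delta * (1 - alpha / LL) ^+ W * LT
   = LL / alpha * ((1 - alpha / LL) ^+ W * (delta * LT)) by ring.
rewrite -[X in X <= _]mul1r.
by apply: ler_wpM2r.
Qed.

Lemma final_rhag W LT w : SX w -> path_length x0 T theta <= LT -> 0 <= LT ->
  Cc (xs W) - Cc w <= 2 * delta * (1 - (Num.sqrt (LL / alpha))^-1) ^+ W * LT.
Proof.
move=> Sw PL LT0.
have [r0 [a0 a1]] := r_bounds.
have -> : (Num.sqrt (LL / alpha))^-1 = rho.
  rewrite -sqrtrV ?invf_div //; last by apply: divr_ge0; apply: ltW; [apply: LL0|].
have c0 : 0 <= (1 - rho) ^+ W by apply: exprn_ge0; have := rho1; lra.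
have B0 : 0 <= delta * LT by apply: mulr_ge0 => //; apply: delta_ge0.
have -> : 2 * delta * (1 - rho) ^+ W * LT = 2 * (1 - rho) ^+ W * (delta * LT) by ring.
apply: squeeze => // eps e0.
set m := \sum_(1 <= t < T.+1) f t (theta t).
have Cwm : forall w', SX w' -> m <= Cc w' by move=> w' Sw'; apply: Cw_lb.
clearbody m.
have M0 : 0 <= Cc (xg 0) - m by have := Cwm _ (SX_xg 0); lra.
have [j hj] := geom_small a0 a1 M0 e0.
set z := xg j.
have Sz : SX z by apply: SX_xg.
have nearmin : forall w', SX w' -> Cc z - Cc w' <= eps.
  move=> w' Sw'; apply: le_trans (rhgd_gap j Sw') _.
  apply: le_trans hj; apply: ler_wpM2l; first exact: exprn_ge0.
  by have := Cwm _ Sw'; lra.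
have g0 : Cc (xs 0) - Cc z <= delta * LT by rewrite xs0_eq; apply: init_gap_LT.
exists (alpha / 2 * sqn ipT (xs 0 - z)); split.
  by apply: mulr_ge0; [apply: divr_ge0; [apply: ltW|]|apply: ipT_ge0].
split.
  have h1 := rhag_gap W Sz.
  have h2 := nearmin w Sw.
  have h3 : (1 - rho) ^+ W * (Cc (xs 0) - Cc z + alpha / 2 * sqn ipT (xs 0 - z))
     <= (1 - rho) ^+ W * (delta * LT + alpha / 2 * sqn ipT (xs 0 - z)).
    by apply: ler_wpM2l => //; rewrite lerD2r.
  lra.
move=> s s0 s1.
have sc := sconv ipTDl ipTZl ipTC Clower (xs 0) z (ltW s0) (ltW s1).
have Smix : SX (s *: xs 0 + (1 - s) *: z) by apply: convSX => //; [apply: SX0|apply: ltW|apply: ltW].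
have nm := nearmin _ Smix.
have h4 : s * (Cc (xs 0) - Cc z) <= s * (delta * LT) by apply: ler_wpM2l => //; apply: ltW.
have -> : s * (1 - s) * (alpha / 2 * sqn ipT (xs 0 - z)) = alpha / 2 * (s * (1 - s)) * sqn ipT (xs 0 - z) by ring.
move: h4; rewrite mulrBr. lra.
Qed.
End Main.

End RH.

Theorem theorem2 (R : realType) (n : nat) (X : set 'rV[R]_n) (D : R)
    (beta : R) (x0 : 'rV[R]_n) (T : nat) (alpha l G LT : R) (W : nat)
    (proj : 'rV[R]_n -> 'rV[R]_n) :
  X !=set0 -> compact X -> convexS X ->
  (forall x y, X x -> X y -> enorm (x - y) <= D) ->
  0 <= beta -> X x0 -> (1 <= T)%N ->
  0 < alpha -> alpha <= l -> 0 < G ->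
  0 <= LT -> LT <= D * T%:R ->
  (forall z, is_proj X z (proj z)) ->
  let L := l + 4%:R * beta in
  let gamma := l^-1 in
  let eta := L^-1 in
  let lam := (1 - Num.sqrt (alpha * eta)) / (1 + Num.sqrt (alpha * eta)) in
  let kappa := Num.sqrt (1 - alpha / l) in
  let delta := (beta / l + 1) * (G / (1 - kappa)) in
  let Qf := (l + 4%:R * beta) / alpha in
  forall (f : nat -> 'rV[R]_n -> R) (theta : nat -> 'rV[R]_n),
    (forall t, (1 <= t <= T)%N -> in_class X alpha l G (f t)) ->
    (forall t, (1 <= t <= T)%N -> is_argmin X (f t) (theta t)) ->
    path_length x0 T theta <= LT ->
    forall y : nat -> 'rV[R]_n, (forall t, (1 <= t <= T)%N -> X (y t)) ->
      cost f beta x0 T (rhgd_out proj f beta gamma eta x0 T W) - cost f beta x0 T y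
        <= Qf * delta * (1 - Qf^-1) ^+ W * LT
      /\
      cost f beta x0 T (rhag_out proj f beta gamma eta lam x0 T W) - cost f beta x0 T y
        <= 2%:R * delta * (1 - (Num.sqrt Qf)^-1) ^+ W * LT.
Proof.
move=> _ _ convX _ beta0 Xx0 T1 alpha0 alphal G0 LT0 _ projP L gamma eta lam kappa delta Qf
  f theta fclass thmin PL y Sy.
split.
  exact: (RH.final_rhgd convX beta0 Xx0 T1 alpha0 alphal G0 projP fclass thmin W Sy PL LT0).
exact: (RH.final_rhag convX beta0 Xx0 T1 alpha0 alphal G0 projP fclass thmin W Sy PL LT0).
Qed.
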